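(* Let $n\in\mathbb N$, let $W,M$ be disjoint sets with $|W|=|M|=2n$, let $p\in W\cup M$, and let $D=\{(i,j)\in\{1,\dots,n\}^2: i\ne j\}$. There exist functions $\succ_W:\{0,1\}^D\to\mathcal P(W,M)$ and $\succ_M:\{0,1\}^D\to\mathcal P(M,W)$ such that for all $\bar x=(x^i_j)_{(i,j)\in D}$ and $\bar y=(y^i_j)_{(i,j)\in D}$ in $\{0,1\}^D$, the following are equivalent: (1) $p$ is single in some stable marriage with respect to $\succ_W(\bar x)$ and $\succ_M(\bar y)$; (2) $\mathrm{DISJ}(\bar x,\bar y)\ne0$.
   Context: $\mathcal P(A,B)$ is the set of profiles assigning to each $a\in A$ a preference list, i.e. a totally ordered subset of $B$ (others unacceptable). A participant prefers $x$ over $x'$ if $x$ precedes $x'$ on their list, or $x$ is on the list and $x'$ is not (being single counts as being matched to someone off the list). A marriage is a one-to-one map between a subset of $W$ and a subset of $M$; unmatched participants are single. A marriage is stable if every married participant is married to someone on their list and there is no blocking pair $(w,m)$ where $w$ prefers $m$ to her current situation and $m$ prefers $w$ to his. $\mathrm{DISJ}(\bar x,\bar y)=1$ if there is no $(i,j)$ with $x^i_j=y^i_j=1$, and $0$ otherwise. *)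

(* Defs.v *)
From mathcomp Require Import all_boot.
Set Implicit Arguments. Unset Strict Implicit. Unset Printing Implicit Defensive.

(* A profile in P(A,B): each a gets a preference list, a duplicate-free
   sequence of elements of B (earlier = more preferred); elements not on the
   list are unacceptable. *)
Definition profile (A B : finType) := A -> seq B.
Definition is_profile (A B : finType) (P : profile A B) : Prop :=
  forall a, uniq (P a).

(* [prefers l x s]: a participant with list l prefers x to situation s,
   where s = None means single (= matched to someone off the list). *)
Definition prefers (B : finType) (l : seq B) (x : B) (s : option B) : bool :=
  (x \in l) &&
  (match s with
   | None => true
   | Some x' => (x' \notin l) || (index x l < index x' l)
   end).

Definition is_marriage (W M : finType) (mu : W -> option M) : Prop :=
  forall w1 w2 m, mu w1 = Some m -> mu w2 = Some m -> w1 = w2.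

Definition partnerM (W M : finType) (mu : W -> option M) (m : M) : option W :=
  [pick w | mu w == Some m].

Definition stable (W M : finType) (PW : profile W M) (PM : profile M W)
  (mu : W -> option M) : Prop :=
  is_marriage mu /\
  (forall w m, mu w = Some m -> (m \in PW w) /\ (w \in PM m)) /\
  (forall w m, ~ (prefers (PW w) m (mu w) && prefers (PM m) w (partnerM mu m))).

Definition single (W M : finType) (mu : W -> option M) (p : W + M) : Prop :=
  match p with
  | inl w => mu w = None
  | inr m => forall w, mu w <> Some m
  end.

Definition Dn (n : nat) := {ij : 'I_n * 'I_n | ij.1 != ij.2}.

Definition DISJ (n : nat) (x y : Dn n -> bool) : nat :=
  if [exists d : Dn n, x d && y d] then 0 else 1.

(* Main.v *)
Require Import Defs.
From mathcomp Require Import all_boot.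
From mathcomp Require Import zify.
Set Implicit Arguments. Unset Strict Implicit. Unset Printing Implicit Defensive.

Definition xb n (x : Dn n -> bool) (i j : nat) : bool :=
  [exists d : Dn n, [&& x d, nat_of_ord (val d).1 == i & nat_of_ord (val d).2 == j]].

Lemma xb_disj n (x y : Dn n -> bool) i j :
  xb x i j -> xb y i j -> [exists d, x d && y d].
Proof.
move=> /existsP[d1 /and3P[h1 /eqP e1 /eqP f1]] /existsP[d2 /and3P[h2 /eqP e2 /eqP f2]].
apply/existsP; exists d1; rewrite h1 /=.
have -> : d1 = d2.
  apply: val_inj; move: (val d1) (val d2) e1 f1 e2 f2 => [a b] [c d] /= e1 f1 e2 f2.
  by congr pair; apply: val_inj => /=; rewrite ?e1 ?e2 ?f1 ?f2.
by [].
Qed.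

Lemma disj_xb n (x y : Dn n -> bool) :
  [exists d, x d && y d] -> exists i j, xb x i j && xb y i j.
Proof.
move=> /existsP[d /andP[hx hy]]; exists (val d).1, (val d).2.
by apply/andP; split; apply/existsP; exists d; rewrite ?hx ?hy !eqxx.
Qed.

Lemma xb_lt n (x : Dn n -> bool) i j : xb x i j -> (i < n) && (j < n).
Proof.
by move=> /existsP[d /and3P[_ /eqP <- /eqP <-]]; rewrite !ltn_ord.
Qed.

Definition wof (W : finType) (P : W) (i : nat) : W := nth P (enum (predC1 P)) i.
Definition iw (W : finType) (P : W) (w : W) : nat := index w (enum (predC1 P)).
Definition mof (M : finType) (m0 : M) (k : nat) : M := nth m0 (enum M) k.
Definition im (M : finType) (m : M) : nat := index m (enum M).

Lemma wofK (W : finType) (P : W) i : i < #|W|.-1 -> iw P (wof P i) = i.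
Proof. by move=> h; rewrite /iw /wof index_uniq ?enum_uniq // -cardE cardC1. Qed.

Lemma wof_neq (W : finType) (P : W) i : i < #|W|.-1 -> wof P i != P.
Proof.
move=> h; have : wof P i \in enum (predC1 P) by rewrite mem_nth // -cardE cardC1.
by rewrite mem_enum inE.
Qed.

Lemma iwK (W : finType) (P : W) w : w != P -> wof P (iw P w) = w.
Proof. by move=> h; rewrite /wof /iw nth_index // mem_enum inE. Qed.

Lemma mofK (M : finType) (m0 : M) k : k < #|M| -> im (mof m0 k) = k.
Proof. by move=> h; rewrite /im /mof index_uniq ?enum_uniq // -cardE. Qed.

Lemma imK (M : finType) (m0 : M) m : mof m0 (im m) = m.
Proof. by rewrite /mof /im nth_index // mem_enum. Qed.

Lemma im_lt (M : finType) (m : M) : im m < #|M|.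
Proof. by rewrite /im cardE index_mem mem_enum. Qed.

Definition PW1 n (W M : finType) (P : W) (m0 : M) (x : Dn n -> bool) : profile W M :=
  fun w => if w == P then map (mof m0) (iota n n)
    else if iw P w < n then
      map (mof m0) ([seq j <- iota 0 n | xb x (iw P w) j] ++ [:: n + iw P w])
    else [::].
Definition PM1 n (W M : finType) (P : W) (y : Dn n -> bool) : profile M W :=
  fun m => if im m < n then map (wof P) [seq i <- iota 0 n | xb y i (im m)]
    else if im m < 2 * n then [:: wof P (im m - n); P] else [::].
Definition mu1 n (W M : finType) (P : W) (m0 : M) : W -> option M :=
  fun w => if w == P then None
    else if iw P w < n then Some (mof m0 (n + iw P w)) else None.

Lemma case1 n (W M : finType) (hW : #|W| = 2 * n) (hM : #|M| = 2 * n) (P : W) :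
  exists (SW : (Dn n -> bool) -> profile W M) (SM : (Dn n -> bool) -> profile M W),
    (forall x, is_profile (SW x)) /\ (forall y, is_profile (SM y)) /\
    forall x y : Dn n -> bool,
      (exists mu : W -> option M, stable (SW x) (SM y) mu /\ single mu (inl P)) <->
      DISJ x y <> 0.
Proof.
have hn : 0 < n.
  have : 0 < #|W| by apply/card_gt0P; exists P.
  by rewrite hW; lia.
have [m0 _] : exists m0 : M, true.
  have : 0 < #|M| by rewrite hM; lia.
  by case/card_gt0P => m _; exists m.
have wK i : i < n -> iw P (wof P i) = i.
  by move=> hi; apply: wofK; rewrite hW; lia.
have wN i : i < n -> wof P i != P.
  by move=> hi; apply: wof_neq; rewrite hW; lia.
have mK k : k < 2 * n -> im (mof m0 k) = k.
  by move=> hk; apply: mofK; rewrite hM.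
have mlt (m : M) : im m < 2 * n by move: (im_lt m); rewrite hM.
have uM L : uniq L -> all (fun k => k < 2 * n) L -> uniq (map (mof m0) L).
  move=> uL hL; rewrite map_inj_in_uniq // => a b /(allP hL) ha /(allP hL) hb e.
  by rewrite -(mK a ha) e mK.
have uW L : uniq L -> all (fun k => k < n) L -> uniq (map (wof P) L).
  move=> uL hL; rewrite map_inj_in_uniq // => a b /(allP hL) ha /(allP hL) hb e.
  by rewrite -(wK a ha) e wK.
exists (@PW1 n W M P m0), (@PM1 n W M P).
split.
  move=> x w; rewrite /PW1; case: ifP => _.
    apply: uM; first exact: iota_uniq.
    by apply/allP => k; rewrite mem_iota; lia.
  case: ifP => hi //.
  apply: uM.
    rewrite cat_uniq filter_uniq ?iota_uniq //= orbF andbT mem_filter mem_iota.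
    by apply/negP => /andP[_ h]; lia.
  apply/allP => k; rewrite mem_cat mem_filter mem_iota inE => /orP[/andP[_ h]|/eqP->]; lia.
split.
  move=> y m; rewrite /PM1; case: ifP => h1.
    apply: uW; first exact: filter_uniq (iota_uniq _ _).
    by apply/allP => k; rewrite mem_filter mem_iota; lia.
  case: ifP => h2 //=; rewrite inE andbT; apply: wN; lia.
have mu1w i : i < n -> @mu1 n W M P m0 (wof P i) = Some (mof m0 (n + i)).
  by move=> hi; rewrite /mu1 (negbTE (wN _ hi)) wK // hi.
have mu1inv w m : @mu1 n W M P m0 w = Some m ->
    exists2 i, i < n & w = wof P i /\ m = mof m0 (n + i).
  rewrite /mu1; case: ifP => // hP; case: ifP => // hi [<-].
  by exists (iw P w) => //; rewrite iwK // hP.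
have pm i : i < n -> partnerM (@mu1 n W M P m0) (mof m0 (n + i)) = Some (wof P i).
  move=> hi; rewrite /partnerM; case: pickP => [w' /eqP e|hno].
    have [k hk [-> e2]] := mu1inv _ _ e.
    have : n + i = n + k by rewrite -(mK (n + i)) ?e2 ?mK //; lia.
    by move=> /eqP; rewrite eqn_add2l => /eqP ->.
  by move: (hno (wof P i)); rewrite mu1w // eqxx.
move=> x y; rewrite /DISJ; case: ifP => hc; split => //; last first.
  move=> _; exists (@mu1 n W M P m0); split; last by rewrite /single /mu1 eqxx.
  split.
    move=> w1 w2 m /mu1inv[i1 hi1 [-> ->]] /mu1inv[i2 hi2 [-> e]].
    have : n + i1 = n + i2 by rewrite -(mK (n + i1)) ?e ?mK //; lia.
    by move=> /eqP; rewrite eqn_add2l => /eqP ->.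
  split.
    move=> w m /mu1inv[i hi [-> ->]]; split.
      rewrite /PW1 (negbTE (wN _ hi)) wK // hi.
      by apply/mapP; exists (n + i) => //; rewrite mem_cat inE eqxx orbT.
    rewrite /PM1 mK; last lia.
    rewrite ifF; last lia.
    by rewrite ifT ?addKn ?inE ?eqxx //; lia.
  move=> w m.
  case: (w =P P) => [->|hP].
    rewrite /PW1 eqxx => /andP[/andP[/mapP[k hk ->] _]].
    move: hk; rewrite mem_iota => hk.
    have -> : k = n + (k - n) by lia.
    rewrite pm; last lia.
    rewrite /PM1 mK; last lia.
    rewrite ifF; last lia.
    rewrite ifT; last lia.
    by rewrite addKn /prefers /= !inE !eqxx /= ?ltn0 ?andbF.
  case hi: (iw P w < n); last first.
    by rewrite /PW1 (introF eqP hP) hi /prefers in_nil.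
  rewrite /PW1 /mu1 (introF eqP hP) hi map_cat.
  set l1 := map _ (filter _ _).
  set d := mof m0 (n + iw P w).
  move=> /andP[/andP[hm hidx] h2].
  have : m \in l1.
    move: hm; rewrite mem_cat inE => /orP[//|/eqP em].
    by move: hidx; rewrite em ltnn mem_cat inE eqxx orbT.
  move=> /mapP[j]; rewrite mem_filter mem_iota => /andP[hxj hj] em.
  move: h2; rewrite em /PM1 mK; last lia.
  rewrite ifT; last lia.
  move=> /andP[/mapP[i']]; rewrite mem_filter mem_iota => /andP[hyi hi'] ew _.
  have : iw P w = i' by rewrite ew wK //; lia.
  move=> e; rewrite -e in hyi.
  by move: hc; rewrite (xb_disj hxj hyi).
move=> [mu [[hmar [hacc hnb]] hs]] _.
rewrite /single in hs.
have [i [j /andP[hx hy]]] := disj_xb hc.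
have /andP[hi hj] := xb_lt hx.
suff [k [hk hne]] : exists k, k < n /\ mu (wof P k) <> Some (mof m0 (n + k)).
  have sing : forall w, mu w <> Some (mof m0 (n + k)).
    move=> w e; have [_ hw] := hacc _ _ e.
    move: hw; rewrite /PM1 mK; last lia.
    rewrite ifF; last lia.
    rewrite ifT; last lia.
    rewrite addKn !inE => /orP[/eqP ew|/eqP ew].
      by apply: hne; rewrite -ew.
    by move: e; rewrite ew hs.
  apply: (hnb P (mof m0 (n + k))).
  rewrite /prefers hs.
  have -> : partnerM mu (mof m0 (n + k)) = None.
    by rewrite /partnerM; case: pickP => // w /eqP e; case: (sing w).
  rewrite /PW1 eqxx /PM1 mK; last lia.
  rewrite ifF; last lia.
  rewrite ifT; last lia.
  rewrite !andbT !inE eqxx orbT andbT.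
  by apply/mapP; exists (n + k) => //; rewrite mem_iota; lia.
case E: (mu (wof P i) == Some (mof m0 (n + i))); last first.
  by exists i; split => //; move/eqP; rewrite E.
move/eqP: E => E.
have := hnb (wof P i) (mof m0 j).
rewrite E.
have hA : prefers (@PW1 n W M P m0 x (wof P i)) (mof m0 j) (Some (mof m0 (n + i))).
  rewrite /PW1 (negbTE (wN i hi)) wK // hi map_cat /prefers.
  set F := [seq j0 <- iota 0 n | xb x i j0].
  have hjF : mof m0 j \in map (mof m0) F.
    by apply/mapP; exists j => //; rewrite mem_filter hx mem_iota; lia.
  have hdF : mof m0 (n + i) \notin map (mof m0) F.
    apply/negP => /mapP[k]; rewrite mem_filter mem_iota => /andP[_ hk] e.
    have := mK (n + i); rewrite e mK; lia.
  rewrite !mem_cat hjF /= inE eqxx orbT /= !index_cat hjF (negbTE hdF) /= eqxx addn0.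
  by rewrite index_mem.
rewrite hA /= => hB.
case Ep: (partnerM mu (mof m0 j)) => [w'|].
  move: Ep; rewrite /partnerM; case: pickP => [w'' /eqP e [ew]|_] //.
  subst w''.
  have [_ hw] := hacc _ _ e.
  move: hw; rewrite /PM1 mK; last lia.
  rewrite hj => /mapP[k]; rewrite mem_filter mem_iota => /andP[_ hk] ew.
  exists k; split; first lia.
  rewrite -ew e => -[] e2.
  have := mK j; rewrite e2 mK; lia.
move: hB; rewrite Ep => hB; exfalso; apply: hB.
rewrite /prefers andbT /PM1 mK; last lia.
by rewrite hj; apply/mapP; exists i => //; rewrite mem_filter hy mem_iota; lia.
Qed.

Lemma partnerM_some (W M : finType) (mu : W -> option M) m w :
  partnerM mu m = Some w -> mu w = Some m.
Proof. by rewrite /partnerM; case: pickP => // w' /eqP e [<-]. Qed.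

Lemma partnerM_inv (W M : finType) (mu : W -> option M) :
  is_marriage mu -> forall w m, mu w = Some m -> partnerM mu m = Some w.
Proof.
move=> hmar w m e; rewrite /partnerM; case: pickP => [w' /eqP e'|h].
  by congr Some; exact: hmar e' e.
by move: (h w); rewrite e eqxx.
Qed.

Lemma marriage_partner (W M : finType) (mu : W -> option M) :
  is_marriage (partnerM mu).
Proof.
move=> m1 m2 w /partnerM_some e1 /partnerM_some e2; congruence.
Qed.

Lemma partnerM_partner (W M : finType) (mu : W -> option M) :
  is_marriage mu -> forall w, partnerM (partnerM mu) w = mu w.
Proof.
move=> hmar w; case E: (mu w) => [m|].
  apply: partnerM_inv; first exact: marriage_partner.
  exact: partnerM_inv.
by rewrite /partnerM; case: pickP => // m /eqP /partnerM_some; rewrite E.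
Qed.

Lemma stable_swap (W M : finType) (A : profile W M) (B : profile M W) mu :
  stable A B mu -> stable B A (partnerM mu).
Proof.
move=> [hmar [hacc hnb]]; split; first exact: marriage_partner.
split.
  by move=> m w /partnerM_some /hacc [h1 h2].
by move=> m w; rewrite partnerM_partner // andbC; exact: hnb.
Qed.

Lemma DISJC n (x y : Dn n -> bool) : DISJ x y = DISJ y x.
Proof.
rewrite /DISJ; congr (if _ then _ else _); apply/existsP/existsP => [] [d h];
  by exists d; rewrite andbC.
Qed.

Theorem lemma21 (n : nat) (W M : finType) (hW : #|W| = 2 * n) (hM : #|M| = 2 * n)
  (p : W + M) :
  exists (SW : (Dn n -> bool) -> profile W M) (SM : (Dn n -> bool) -> profile M W),
    (forall x, is_profile (SW x)) /\ (forall y, is_profile (SM y)) /\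
    forall x y : Dn n -> bool,
      (exists mu : W -> option M, stable (SW x) (SM y) mu /\ single mu p) <->
      DISJ x y <> 0.
Proof.
case: p => [P|P]; first exact: case1.
have [SW' [SM' [h1 [h2 h3]]]] := case1 hM hW P.
exists SM', SW'; split => //; split => // x y.
rewrite DISJC -h3; split.
  move=> [mu [hst hs]]; exists (partnerM mu); split; first exact: stable_swap.
  by rewrite /single /partnerM; case: pickP => // w /eqP /hs.
move=> [mu [hst hs]]; exists (partnerM mu); split; first exact: stable_swap.
move=> w /partnerM_some; rewrite /single in hs; congruence.
Qed.
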